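(* Fix a real parameter $k$. Let $G$ be a topology that is weakly consistent (with respect to $k$) and physically connected. Then $G$ is weakly connected, i.e., for any two nodes $u,v$ of $G$ there is a directed path from $u$ to $v$ consisting only of links that are active or unclassified.
   Context: A topology is a finite directed graph $G=(V,E)$ whose links $e\in E$ carry a real weight $w(e)$ and a state $s(e)\in\{\mathrm{active},\mathrm{inactive},\mathrm{unclassified}\}$; a link is classified if it is active or inactive. A path is a finite sequence of links in which the target of each link is the source of the next. $G$ is physically connected if between any two nodes there is a directed path of links in arbitrary state. $G$ is structurally consistent if it has no loops and no parallel links (two distinct links with the same source and target). For a link $ab$ from $a$ to $b$, a triangle for $ab$ is a node $c\notin\{a,b\}$ with classified links $ac$ and $cb$ such that $w(ab)>\max(w(ac),w(cb))$ and $w(ab)\ge k\cdot\min(w(ac),w(cb))$. Inactive-link constraint: every inactive link has a triangle. Active-link constraint: no active link has a triangle. $G$ is weakly consistent if it is structurally consistent and fulfills both the active-link and inactive-link constraints. *)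

(* Defs.v *)
From HB Require Import structures.
From mathcomp Require Import all_boot all_order all_algebra.
From mathcomp Require Import reals.
Set Implicit Arguments. Unset Strict Implicit. Unset Printing Implicit Defensive.
Import Order.TTheory GRing.Theory Num.Theory.
Local Open Scope ring_scope.

Inductive state := Active | Inactive | Unclassified.

Definition classified (s : state) : Prop := s = Active \/ s = Inactive.

(* A topology: finite node set V, finite link set E (links are first-class,
   so parallel links and loops are representable), source/target maps,
   real weights and states. *)
Record topology (R : realType) := Topology {
  node : finType;
  link : finType;
  src : link -> node;
  tgt : link -> node;
  weight : link -> R;
  lstate : link -> state }.

Section Defs.
Variable R : realType.
Variable G : topology R.

Fixpoint walk (u v : node G) (p : seq (link G)) : Prop :=
  match p with
  | [::] => u = v
  | e :: p' => src e = u /\ walk (tgt e) v p'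
  end.

Definition physically_connected : Prop :=
  forall u v : node G, exists p, walk u v p.

Definition weakly_connected : Prop :=
  forall u v : node G, exists p, walk u v p /\
    (forall e, e \in p -> lstate e = Active \/ lstate e = Unclassified).

Definition structurally_consistent : Prop :=
  (forall e : link G, src e <> tgt e) /\
  (forall e f : link G, e <> f -> src e = src f -> tgt e = tgt f -> False).

Definition has_triangle (k : R) (ab : link G) : Prop :=
  exists (c : node G) (ac cb : link G),
    c <> src ab /\ c <> tgt ab /\
    src ac = src ab /\ tgt ac = c /\ src cb = c /\ tgt cb = tgt ab /\
    classified (lstate ac) /\ classified (lstate cb) /\
    Num.max (weight ac) (weight cb) < weight ab /\
    k * Num.min (weight ac) (weight cb) <= weight ab.

Definition inactive_link_constraint (k : R) : Prop :=
  forall e : link G, lstate e = Inactive -> has_triangle k e.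

Definition active_link_constraint (k : R) : Prop :=
  forall e : link G, lstate e = Active -> ~ has_triangle k e.

Definition weakly_consistent (k : R) : Prop :=
  structurally_consistent /\ active_link_constraint k /\ inactive_link_constraint k.
End Defs.

(* Main.v *)
Require Import Defs.
From mathcomp Require Import all_boot all_order all_algebra.
From mathcomp Require Import reals.
Import Order.TTheory GRing.Theory Num.Theory.
Local Open Scope ring_scope.

Section Aux.
Variable R : realType.
Variable G : topology R.

Definition good (p : seq (link G)) :=
  forall e, e \in p -> lstate e = Active \/ lstate e = Unclassified.

Lemma walk_cat u v w (p q : seq (link G)) :
  walk u v p -> walk v w q -> walk u w (p ++ q).
Proof.
elim: p u => [|e p IH] u /=; first by move=> ->.
by move=> [He Hp] Hq; split => //; apply: IH.
Qed.

Lemma good_cat (p q : seq (link G)) : good p -> good q -> good (p ++ q).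
Proof. by move=> Hp Hq e; rewrite mem_cat => /orP [/Hp|/Hq]. Qed.

Definition msr (e : link G) := #|[pred f : link G | weight f < weight e]|.

Lemma msr_lt {e f : link G} : weight f < weight e -> (msr f < msr e)%N.
Proof.
move=> H; apply: proper_card; apply/properP; split.
  apply/subsetP => x; rewrite !inE => Hx; exact: lt_trans Hx H.
by exists f; rewrite !inE ?H // ltxx.
Qed.

Lemma link_good k : inactive_link_constraint G k ->
  forall e : link G, exists p, walk (src e) (tgt e) p /\ good p.
Proof.
move=> Hin.
suff: forall n e, (msr e < n)%N -> exists p, walk (src e) (tgt e) p /\ good p.
  by move=> H e; apply: (H (msr e).+1).
elim=> [|n IH] e //= Hn.
case Hs: (lstate e).
- exists [:: e]; split => /=; first by split.
  by move=> x; rewrite inE => /eqP ->; left.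
- have [c [ac [cb [_ [_ [Hac [Hc [Hcb [Hcb' [_ [_ [Hw _]]]]]]]]]]]] := Hin e Hs.
  have Hwac : weight ac < weight e by apply: le_lt_trans Hw; rewrite le_max lexx.
  have Hwcb : weight cb < weight e by apply: le_lt_trans Hw; rewrite le_max lexx orbT.
  have [p1 [W1 G1]] := IH ac (leq_trans (msr_lt Hwac) Hn).
  have [p2 [W2 G2]] := IH cb (leq_trans (msr_lt Hwcb) Hn).
  exists (p1 ++ p2); split; last exact: good_cat.
  rewrite -Hac -Hcb'; apply: walk_cat W1 _; rewrite Hc -Hcb; exact: W2.
- exists [:: e]; split => /=; first by split.
  by move=> x; rewrite inE => /eqP ->; right.
Qed.
End Aux.

Theorem theorem3 (R : realType) (k : R) (G : topology R) :
  weakly_consistent G k -> physically_connected G -> weakly_connected G.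
Proof.
move=> [_ [_ Hin]] Hpc u v.
have [p Hp] := Hpc u v.
elim: p u Hp => [|e p IH] u /=.
  by move=> ->; exists [::]; split => //.
move=> [<- Hp].
have [q [Wq Gq]] := @link_good _ G k Hin e.
have [r [Wr Gr]] := IH _ Hp.
exists (q ++ r); split; [exact: walk_cat Wq Wr | exact: good_cat].
Qed.
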